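(* Let $d\ge 1$, $0<\alpha<1$ and $\beta=1-\alpha$. Let $\sigma$ satisfy the Activation Assumption below, and let $\overline{A}\colon[0,1]\to\mathbb{R}^{d\times d}$ and $\overline{b}\colon[0,1]\to\mathbb{R}^d$ be deterministic functions for which there exist $M>0$, $\kappa>0$ with $\|\overline{A}_t-\overline{A}_s\|^2+\|\overline{b}_t-\overline{b}_s\|^2\le M|t-s|^\kappa$ for all $s,t\in[0,1]$. For each $L\in\mathbb{N}$ and $x\in\mathbb{R}^d$ define the (deterministic) hidden states $$h^{(L)}_0=x,\qquad h^{(L)}_{k+1}=h^{(L)}_k+L^{-\alpha}\,\sigma_d\!\left(A^{(L)}_k h^{(L)}_k+b^{(L)}_k\right),\quad k=0,\dots,L-1,$$ with $A^{(L)}_k=L^{-\beta}\overline{A}_{k/L}$ and $b^{(L)}_k=L^{-\beta}\overline{b}_{k/L}$. Assume there exist $p_1>4$ and $C_0>0$ such that $\sup_{0\le k\le L}\|h^{(L)}_k\|^{p_1}\le C_0$ for all $L$. Let $H$ be the solution of the linear ODE $$\frac{\mathrm{d}H_t}{\mathrm{d}t}=\overline{A}_tH_t+\overline{b}_t,\qquad H_0=x.$$ Then $\displaystyle\lim_{L\to\infty}\sup_{0\le t\le 1}\left\|H_t-h^{(L)}_{\lfloor tL\rfloor}\right\|=0.$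
   Context: $\|\cdot\|$ is the Euclidean norm on vectors and the Frobenius norm on matrices. For $\sigma\colon\mathbb{R}\to\mathbb{R}$, $\sigma_d(y)=(\sigma(y_1),\dots,\sigma(y_d))^\top$ denotes the componentwise extension to $y\in\mathbb{R}^d$. $\lfloor u\rfloor$ is the integer part of $u$. Activation Assumption: $\sigma\in\mathcal{C}^3(\mathbb{R},\mathbb{R})$, $\sigma(0)=0$, $\sigma'(0)=1$, and $\sigma'''$ is bounded on $\mathbb{R}$. *)

(* Defs.v *)
From HB Require Import structures.
From mathcomp Require Import all_boot all_order all_algebra.
From mathcomp Require Import all_classical all_reals all_analysis.
Set Implicit Arguments. Unset Strict Implicit. Unset Printing Implicit Defensive.
Import Order.TTheory GRing.Theory Num.Theory.
Import numFieldNormedType.Exports.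
Local Open Scope classical_set_scope.
Local Open Scope ring_scope.

Definition vnorm {R : realType} {d : nat} (v : 'cV[R]_d) : R :=
  Num.sqrt (\sum_(i < d) v i 0 ^+ 2).

Definition fnorm {R : realType} {d : nat} (A : 'M[R]_d) : R :=
  Num.sqrt (\sum_(i < d) \sum_(j < d) A i j ^+ 2).

Definition sigmad {R : realType} {d : nat} (s : R -> R) (v : 'cV[R]_d) : 'cV[R]_d :=
  map_mx s v.

Definition activation_assumption {R : realType} (s : R -> R) : Prop :=
  (forall y : R, derivable s y 1) /\
  (forall y : R, derivable (derive1 s) y 1) /\
  (forall y : R, derivable (derive1n 2 s) y 1) /\
  continuous (derive1n 3 s) /\
  s 0 = 0 /\ derive1 s 0 = 1 /\
  (exists K : R, forall y : R, `|derive1n 3 s y| <= K).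

Fixpoint hstate {R : realType} {d : nat} (s : R -> R) (alpha : R)
  (Abar : R -> 'M[R]_d) (bbar : R -> 'cV[R]_d) (x : 'cV[R]_d) (L k : nat)
  : 'cV[R]_d :=
  match k with
  | 0%N => x
  | k'.+1 =>
      let hk := hstate s alpha Abar bbar x L k' in
      let beta := 1 - alpha in
      let Ak := (L%:R `^ (- beta)) *: Abar (k'%:R / L%:R) in
      let bk := (L%:R `^ (- beta)) *: bbar (k'%:R / L%:R) in
      hk + (L%:R `^ (- alpha)) *: sigmad s (Ak *m hk + bk)
  end.

(* Main.v *)
Require Import Defs.
From HB Require Import structures.
From mathcomp Require Import all_boot all_order all_algebra.
From mathcomp Require Import all_classical all_reals all_analysis.
From mathcomp Require Import ring lra.
Set Implicit Arguments. Unset Strict Implicit. Unset Printing Implicit Defensive.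
Import Order.TTheory GRing.Theory Num.Theory.
Import numFieldNormedType.Exports.
Local Open Scope classical_set_scope.
Local Open Scope ring_scope.

Section Norms.
Variable R : realType.
Variable d : nat.
Implicit Types (u v : 'cV[R]_d) (A B : 'M[R]_d).

Definition n1 (v : 'cV[R]_d) : R := \sum_(i < d) `|v i 0|.
Definition m1 (A : 'M[R]_d) : R := \sum_(i < d) \sum_(j < d) `|A i j|.

Lemma sum_term_le (f : 'I_d -> R) (i : 'I_d) :
  (forall j, 0 <= f j) -> f i <= \sum_(j < d) f j.
Proof.
move=> f0; rewrite (bigD1 i) //= lerDl; apply: sumr_ge0 => j _; exact: f0.
Qed.

Lemma n1_ge0 v : 0 <= n1 v.
Proof. by apply: sumr_ge0 => i _. Qed.

Lemma m1_ge0 A : 0 <= m1 A.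
Proof. by apply: sumr_ge0 => i _; apply: sumr_ge0. Qed.

Lemma n1_entry v i : `|v i 0| <= n1 v.
Proof. exact: (@sum_term_le (fun j => `|v j 0|)). Qed.

Lemma m1_entry A i j : `|A i j| <= m1 A.
Proof.
apply: le_trans (@sum_term_le (fun i => \sum_(j < d) `|A i j|) i _).
  exact: (@sum_term_le (fun j => `|A i j|)).
by move=> k; apply: sumr_ge0.
Qed.

Lemma n1D u v : n1 (u + v) <= n1 u + n1 v.
Proof.
rewrite /n1 -big_split /=; apply: ler_sum => i _; rewrite mxE; exact: ler_normD.
Qed.

Lemma n1N v : n1 (- v) = n1 v.
Proof. by apply: eq_bigr => i _; rewrite mxE normrN. Qed.

Lemma n1Z c v : n1 (c *: v) = `|c| * n1 v.
Proof.
rewrite /n1 mulr_sumr; apply: eq_bigr => i _; by rewrite mxE normrM.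
Qed.

Lemma n1_sym u v : n1 (u - v) = n1 (v - u).
Proof. by rewrite -n1N opprB. Qed.

Lemma m1B_sym A B : m1 (A - B) = m1 (B - A).
Proof.
apply: eq_bigr => i _; apply: eq_bigr => j _; by rewrite !mxE distrC.
Qed.

Lemma n1_mul A v : n1 (A *m v) <= m1 A * n1 v.
Proof.
rewrite /n1 /m1 mulr_suml; apply: ler_sum => i _; rewrite mxE.
apply: le_trans (ler_norm_sum _ _ _) _.
rewrite mulr_suml; apply: ler_sum => j _; rewrite normrM.
by apply: ler_wpM2l => //; apply: n1_entry.
Qed.

Lemma vnorm_le_n1 v : vnorm v <= n1 v.
Proof.
rewrite /vnorm -(@ger0_norm _ (n1 v)) ?n1_ge0 // -sqrtr_sqr ler_wsqrtr //.
rewrite expr2 mulr_suml; apply: ler_sum => i _.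
rewrite -[v i 0 ^+ 2]ger0_norm ?sqr_ge0 // expr2 normrM; apply: ler_wpM2l => //.
exact: n1_entry.
Qed.

Lemma entry_le_vnorm v i : `|v i 0| <= vnorm v.
Proof.
rewrite /vnorm -sqrtr_sqr ler_wsqrtr //.
by apply: (@sum_term_le (fun j => v j 0 ^+ 2)) => j; exact: sqr_ge0.
Qed.

Lemma n1_le_vnorm v : n1 v <= d%:R * vnorm v.
Proof.
have -> : d%:R * vnorm v = \sum_(i < d) vnorm v.
  by rewrite sumr_const card_ord mulr_natl.
by apply: ler_sum => i _; apply: entry_le_vnorm.
Qed.

Lemma entry_le_fnorm A i j : `|A i j| <= fnorm A.
Proof.
rewrite /fnorm -sqrtr_sqr ler_wsqrtr //.
apply: le_trans (@sum_term_le (fun i => \sum_(j < d) A i j ^+ 2) i _).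
  by apply: (@sum_term_le (fun j => A i j ^+ 2)) => k; exact: sqr_ge0.
by move=> k; apply: sumr_ge0 => *; exact: sqr_ge0.
Qed.

Lemma m1_le_fnorm A : m1 A <= (d * d)%:R * fnorm A.
Proof.
have -> : (d * d)%:R * fnorm A = \sum_(i < d) \sum_(j < d) fnorm A.
  under eq_bigr do rewrite sumr_const card_ord.
  by rewrite sumr_const card_ord -mulrnA mulr_natl.
by apply: ler_sum => i _; apply: ler_sum => j _; apply: entry_le_fnorm.
Qed.
Lemma m1D A B : m1 (A + B) <= m1 A + m1 B.
Proof.
rewrite /m1 -big_split /=; apply: ler_sum => i _.
rewrite -big_split /=; apply: ler_sum => j _; rewrite mxE; exact: ler_normD.
Qed.

End Norms.


Lemma sigma_lin (R : realType) (s : R -> R) :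
  derivable s 0 1 -> derive1 s 0 = 1 -> s 0 = 0 ->
  forall e : R, 0 < e -> exists2 eta : R, 0 < eta &
    forall z : R, `|z| <= eta -> `|s z - z| <= e * `|z|.
Proof.
move=> ds d1 s0 e e0.
have hl : (fun h : R => h^-1 *: ((s \o shift 0) (h *: 1) - s 0)) @ 0^' --> (1 : R).
  move: (ds) => /cvg_ex [l Hl].
  have E : 'D_1 s 0 = l by rewrite /derive; exact: cvg_lim.
  by rewrite -[X in _ --> X]d1 derive1E E.
move/cvgrPdist_le : hl => /(_ e e0) [eta eta0 Heta].
exists (eta / 2); first by rewrite divr_gt0.
move=> z zle.
have [->|z0] := eqVneq z 0; first by rewrite s0 subrr normr0 mulr0.
have := Heta z; rewrite /= sub0r normrN.
have zlt : `|z| < eta by apply: le_lt_trans zle _; rewrite ltr_pdivrMr // ltr_pMr // ltr1n.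
move=> /(_ zlt z0).
rewrite s0 subr0 addr0 /GRing.scale /= mulr1.
have -> : 1 - z^-1 * s z = z^-1 * (z - s z) by rewrite mulrBr mulVf.
rewrite normrM normfV distrC => H.
have nz : 0 < `|z| by rewrite normr_gt0.
by rewrite -ler_pdivrMr // mulrC.
Qed.

Lemma gronwall (R : realType) (q rho : R) (e : nat -> R) (n : nat) :
  1 <= q -> 0 <= rho -> e 0%N <= 0 ->
  (forall k, (k < n)%N -> e k.+1 <= q * e k + rho) ->
  forall k, (k <= n)%N -> e k <= q ^+ k * k%:R * rho.
Proof.
move=> q1 r0 e0 step; elim=> [|k IH] kn; first by rewrite mulr0 mul0r.
apply: le_trans (step k kn) _.
have q0 : 0 <= q by apply: le_trans q1.
have qk1 : 1 <= q ^+ k.+1 by apply: exprn_ege1.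
rewrite exprS -natr1.
have h1 := ler_wpM2l q0 (IH (ltnW kn)).
have h2 : rho <= q * q ^+ k * rho by apply: ler_peMl; rewrite // -exprS.
have -> : q * q ^+ k * (k%:R + 1) * rho = q * (q ^+ k * k%:R * rho) + q * q ^+ k * rho by ring.
exact: lerD.
Qed.


Lemma expbound (R : realType) (a : R) (n k : nat) :
  0 <= a -> (0 < n)%N -> (k <= n)%N -> (1 + a / n%:R) ^+ k <= expR a.
Proof.
move=> a0 n0 kn.
have n0' : 0 < n%:R :> R by rewrite ltr0n.
apply: le_trans (_ : expR (a / n%:R) ^+ k <= _).
  apply: lerXn2r; rewrite ?nnegrE ?expR_ge0 ?expR_ge1Dx //.
  by apply: addr_ge0 => //; apply: divr_ge0 => //; apply: ltW.
rewrite -expRM_natl ler_expR mulrC -mulrA ler_piMr // ler_pdivrMl // mulr1.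
by rewrite ler_nat.
Qed.

Lemma holder_uc (R : realType) (g : R -> R -> R) (M kappa : R) :
  0 < M -> 0 < kappa ->
  (forall s t, s \in `[0, 1] -> t \in `[0, 1] -> g s t <= M * `|t - s| `^ kappa) ->
  forall e, 0 < e -> exists2 del : R, 0 < del &
    forall s t, s \in `[0, 1] -> t \in `[0, 1] -> `|t - s| <= del -> g s t <= e.
Proof.
move=> M0 k0 Hg e e0.
exists ((e / M) `^ kappa^-1); first by apply: powR_gt0; rewrite divr_gt0.
move=> s t s01 t01 le; apply: le_trans (Hg _ _ s01 t01) _.
rewrite -ler_pdivlMl // mulrC.
have -> : e / M = ((e / M) `^ kappa^-1) `^ kappa.
  by rewrite -powRrM mulVf ?gt_eqF // powRr1 // ltW // divr_gt0.
apply: ge0_ler_powR; rewrite ?nnegrE ?powR_ge0 //; exact: ltW.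
Qed.

Lemma pow_decay (R : realType) (beta eta : R) : 0 < beta -> 0 < eta ->
  \forall n \near \oo, n%:R `^ (- beta) <= eta.
Proof.
move=> b0 e0.
near=> n.
have n1 : ((eta^-1) `^ beta^-1) <= n%:R.
  near: n; exact: nbhs_infty_ger.
have np : (0 < n)%N by near: n; exact: nbhs_infty_gt.
have np' : 0 < n%:R :> R by rewrite ltr0n.
rewrite powRN -[X in _ <= X]invrK lef_pV2 ?posrE ?invr_gt0 ?powR_gt0 //.
have -> : eta^-1 = ((eta^-1) `^ beta^-1) `^ beta.
  by rewrite -powRrM mulVf ?gt_eqF // powRr1 // ltW // invr_gt0.
apply: ge0_ler_powR; rewrite ?nnegrE ?powR_ge0 //; try exact: ltW.
Unshelve. all: by end_near.
Qed.

Lemma sqr_le (R : realType) (x y c : R) : 0 <= x -> 0 <= y -> 0 <= c ->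
  x ^+ 2 + y ^+ 2 <= c ^+ 2 -> x <= c /\ y <= c.
Proof. move=> *; split; nra. Qed.


Lemma comp_cont (R : realType) (d : nat) (H : R -> 'cV[R]_d) (D : set R) i :
  {within D, continuous H} -> {within D, continuous (fun t => H t i 0)}.
Proof.
move=> HC x.
exact: (@continuous_comp _ _ _ (from_subspace D H) (fun v : 'cV[R]_d => v i 0) x (HC x) (@coord_continuous _ _ _ i 0 _)).
Qed.

Lemma comp_bound (R : realType) (f : R -> R) :
  {within `[0, 1], continuous f} -> exists K : R, forall t, t \in `[0, 1] -> `|f t| <= K.
Proof.
move=> fc.
have [c1 _ h1] := EVT_max ler01 fc.
have [c2 _ h2] := EVT_min ler01 fc.
exists (`|f c1| + `|f c2|) => t t01.
have := h1 t t01; have := h2 t t01.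
rewrite ler_norml; move=> a b; apply/andP; split.
  have := normr_ge0 (f c1); have := ler_norm (- f c2); rewrite normrN; lra.
have := ler_norm (f c1); have := normr_ge0 (f c2); lra.
Qed.

Lemma comp_deriv (R : realType) (d : nat) (H : R -> 'cV[R]_d) (t : R) (D : 'cV[R]_d) (i : 'I_d) :
  is_derive t 1 H D -> is_derive t 1 (fun t => H t i 0) (D i 0).
Proof.
move=> [dH vH].
have dHi : derivable (fun t => H t i 0) t 1 by move/derivable_mxP: dH; apply.
apply: DeriveDef => //.
by rewrite -vH derive_mx // mxE.
Qed.


Unset Implicit Arguments.


Section Main.
Variables (R : realType) (d : nat) (alpha : R) (s : R -> R)
  (Abar : R -> 'M[R]_d) (bbar : R -> 'cV[R]_d) (x : 'cV[R]_d)
  (M kappa : R) (H : R -> 'cV[R]_d).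
Hypothesis d0 : (0 < d)%N.
Hypothesis M0 : 0 < M.
Hypothesis k0 : 0 < kappa.
Hypothesis Hold : forall s0 t : R, s0 \in `[0, 1] -> t \in `[0, 1] ->
     fnorm (Abar t - Abar s0) ^+ 2 + vnorm (bbar t - bbar s0) ^+ 2
       <= M * `|t - s0| `^ kappa.
Hypothesis Hcont : {within `[0, 1], continuous H}.
Hypothesis Hder : forall t : R, t \in `]0, 1[ ->
     is_derive t 1 H (Abar t *m H t + bbar t).

Definition F t := Abar t *m H t + bbar t.

Let dR : 0 <= d%:R :> R. Proof. exact: ler0n. Qed.

Lemma AB_bound : exists2 mA : R, 0 <= mA & exists2 mb : R, 0 <= mb &
  forall t, t \in `[0, 1] -> m1 (Abar t) <= mA /\ n1 (bbar t) <= mb.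
Proof.
have z01 : (0 : R) \in `[0, 1] by rewrite in_itv /= lexx ler01.
exists (m1 (Abar 0) + (d * d)%:R * (M + 1)).
  apply: addr_ge0; first exact: m1_ge0.
  apply: mulr_ge0; first exact: ler0n.
  by have := M0; lra.
exists (n1 (bbar 0) + d%:R * (M + 1)).
  apply: addr_ge0; first exact: n1_ge0.
  apply: mulr_ge0; first exact: ler0n.
  by have := M0; lra.
move=> t t01.
have h := @Hold 0 t z01 t01.

have tk : `|t - 0| `^ kappa <= 1.
  have := (@powR1 R); move=> /(congr1 (fun f => f kappa)) /= <-.
  apply: ge0_ler_powR; rewrite ?nnegrE //; first exact: ltW.
  by move: t01; rewrite in_itv /= subr0 => /andP [a b]; rewrite ger0_norm.
have h2 : fnorm (Abar t - Abar 0) ^+ 2 + vnorm (bbar t - bbar 0) ^+ 2 <= (M + 1) ^+ 2.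
  apply: le_trans h _; apply: le_trans (_ : M <= _); first by rewrite -[X in _ <= X]mulr1 ler_wpM2l // ltW.
  have := M0; nra.
have M1 : 0 <= M + 1 by have := M0; lra.
have [hA hb] := sqr_le (sqrtr_ge0 _) (sqrtr_ge0 _) M1 h2.
split.
  have -> : Abar t = Abar 0 + (Abar t - Abar 0) by rewrite addrC subrK.
  apply: le_trans (m1D _ _) _; rewrite lerD2l.
  apply: le_trans (m1_le_fnorm _) _; apply: ler_wpM2l => //; exact: ler0n.
have -> : bbar t = bbar 0 + (bbar t - bbar 0) by rewrite addrC subrK.
apply: le_trans (n1D _ _) _; rewrite lerD2l.
apply: le_trans (n1_le_vnorm _) _; exact: ler_wpM2l.
Qed.

Lemma H_bound : exists2 KH : R, 0 <= KH & forall t, t \in `[0, 1] -> n1 (H t) <= KH.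
Proof.
have Hi : forall i : 'I_d, exists K : R, forall t, t \in `[0, 1] -> `|H t i 0| <= K.
  by move=> i; apply: comp_bound; apply: comp_cont.
have [f hf] := boolp.choice Hi.
exists (\sum_(i < d) `|f i|); first by apply: sumr_ge0.
move=> t t01; apply: ler_sum => i _.
by apply: le_trans (hf i t t01) _; apply: ler_norm.
Qed.

Lemma mvt_step a b (i : 'I_d) : 0 <= a -> a < b -> b <= 1 ->
  exists2 c, c \in `]a, b[ & H b i 0 - H a i 0 = F c i 0 * (b - a).
Proof.
move=> a0 ab b1.
have D : forall c, c \in `]a, b[ -> is_derive c 1 (fun t => H t i 0) (F c i 0).
  move=> c; rewrite in_itv /= => /andP [c1 c2].
  apply: comp_deriv; apply: Hder; rewrite in_itv /=; apply/andP; split.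
    exact: le_lt_trans a0 c1.
  exact: lt_le_trans c2 b1.
have C : {within `[a, b], continuous (fun t => H t i 0)}.
apply: (continuous_subspaceW _ (comp_cont (i:=i) Hcont)).
move=> y /=; rewrite !in_itv /= => /andP [y1 y2]; apply/andP; split.
  exact: le_trans a0 y1.
  exact: le_trans y2 b1.
have [c c1 c2] := @MVT R (fun t => H t i 0) (fun t => F t i 0) a b ab D C.
by exists c.
Qed.


Lemma n1_le_const (v : 'cV[R]_d) (K : R) : (forall i, `|v i 0| <= K) -> n1 v <= d%:R * K.
Proof.
move=> hv; have -> : d%:R * K = \sum_(i < d) K by rewrite sumr_const card_ord mulr_natl.
by apply: ler_sum => i _.
Qed.

Variables (mA mb KH : R).
Hypothesis mA0 : 0 <= mA.
Hypothesis mb0 : 0 <= mb.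
Hypothesis KH0 : 0 <= KH.
Hypothesis hmA : forall t, t \in `[0, 1] -> m1 (Abar t) <= mA.
Hypothesis hmb : forall t, t \in `[0, 1] -> n1 (bbar t) <= mb.
Hypothesis hKH : forall t, t \in `[0, 1] -> n1 (H t) <= KH.

Let KF := mA * KH + mb.

Lemma F_bound t : t \in `[0, 1] -> n1 (F t) <= KF.
Proof.
move=> t01; apply: le_trans (n1D _ _) _; apply: lerD; last exact: hmb.
apply: le_trans (n1_mul _ _) _; apply: ler_pM => //; [exact: m1_ge0|exact: n1_ge0|exact: hmA|exact: hKH].
Qed.

Lemma H_lip a b : a \in `[0, 1] -> b \in `[0, 1] ->
  n1 (H b - H a) <= d%:R * KF * `|b - a|.
Proof.
wlog ab : a b / a <= b.
  move=> W a01 b01; case: (leP a b) => [ab|ba]; first exact: W.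
  by rewrite n1_sym distrC; apply: W => //; exact: ltW.
move=> a01 b01.
rewrite -mulrA; apply: n1_le_const => i; rewrite !mxE.
move: ab; rewrite le_eqVlt => /orP [/eqP ->|ab].
  by rewrite !subrr normr0 mulr0.
move: (a01) (b01); rewrite !in_itv /= => /andP [a0 _] /andP [_ b1].
have [c c01 ->] := mvt_step a b i a0 ab b1.
have c01' : c \in `[0, 1].
  move: c01; rewrite !in_itv /= => /andP [c1 c2]; apply/andP; split.
    by apply: le_trans a0 (ltW c1).
  by apply: le_trans (ltW c2) b1.
rewrite normrM; apply: ler_wpM2r => //.
by apply: le_trans (n1_entry _ _) (F_bound c c01').
Qed.


Lemma F_mod a c (eta : R) : a \in `[0, 1] -> c \in `[0, 1] ->
  m1 (Abar c - Abar a) <= eta -> n1 (bbar c - bbar a) <= eta ->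
  n1 (F c - F a) <= mA * (d%:R * KF * `|c - a|) + eta * KH + eta.
Proof.
move=> a01 c01 hA hb.
have -> : F c - F a = Abar c *m (H c - H a) + (Abar c - Abar a) *m H a + (bbar c - bbar a).
  rewrite /F mulmxBr mulmxBl; apply/matrixP => i j; rewrite !mxE; ring.
apply: le_trans (n1D _ _) _; apply: lerD => //.
apply: le_trans (n1D _ _) _; apply: lerD.
  apply: le_trans (n1_mul _ _) _; apply: ler_pM; [exact: m1_ge0|exact: n1_ge0|exact: hmA|].
  exact: H_lip.
apply: le_trans (n1_mul _ _) _; apply: ler_pM; [exact: m1_ge0|exact: n1_ge0|exact: hA|exact: hKH].
Qed.


Lemma powR_split (N : R) : 0 < N -> N `^ (- alpha) * N `^ (- (1 - alpha)) = N^-1.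
Proof.
move=> N0; rewrite -powRD; last by apply/implyP => _; rewrite gt_eqF.
have -> : - alpha + - (1 - alpha) = -1 by ring.
by rewrite powR_inv1 // ltW.
Qed.

Lemma h_step (n k : nat) :
  hstate s alpha Abar bbar x n k.+1 = hstate s alpha Abar bbar x n k +
   n%:R `^ (- alpha) *: sigmad s (n%:R `^ (- (1 - alpha)) *:
      (Abar (k%:R / n%:R) *m hstate s alpha Abar bbar x n k + bbar (k%:R / n%:R))).
Proof. by rewrite /= scalerDr scalemxAl. Qed.


Lemma e_id (Hk Hk1 hk S b : 'cV[R]_d) (A : 'M[R]_d) (ca cb c : R) : ca * cb = c ->
  Hk1 - (hk + ca *: S) = (Hk - hk) + (Hk1 - Hk - c *: (A *m Hk + b))
     + c *: (A *m (Hk - hk)) - ca *: (S - cb *: (A *m hk + b)).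
Proof.
move=> <-; rewrite mulmxBr; apply/matrixP => i j; rewrite !mxE; ring.
Qed.


Lemma n1_entryB (u v : 'cV[R]_d) i : `|u i 0 - v i 0| <= n1 (u - v).
Proof. by have := n1_entry (u - v) i; rewrite !mxE. Qed.

Lemma sig_bound (y : 'cV[R]_d) (eps eta : R) : 0 <= eps ->
  (forall z, `|z| <= eta -> `|s z - z| <= eps * `|z|) ->
  n1 y <= eta -> n1 (sigmad s y - y) <= eps * n1 y.
Proof.
move=> e0 hs hy; rewrite /n1 mulr_sumr; apply: ler_sum => i _.
rewrite !mxE; apply: hs; exact: le_trans (n1_entry _ _) hy.
Qed.

Lemma r_bound (n k : nat) (om : R) : (0 < n)%N -> (k < n)%N ->
  (forall a c, a \in `[0, 1] -> c \in `[0, 1] -> `|c - a| <= n%:R^-1 -> n1 (F c - F a) <= om) ->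
  n1 (H (k.+1%:R / n%:R) - H (k%:R / n%:R) - n%:R^-1 *: F (k%:R / n%:R)) <= d%:R * (n%:R^-1 * om).
Proof.
move=> n0 kn hom.
have N0 : 0 < n%:R :> R by rewrite ltr0n.
set a := k%:R / n%:R; set b := k.+1%:R / n%:R.
have ba : b - a = n%:R^-1.
  rewrite /a /b -mulrBl.
  have -> : k.+1%:R - k%:R = 1 :> R by rewrite -natr1; ring.
  by rewrite mul1r.
have a0 : 0 <= a by rewrite /a divr_ge0 // ltW.
have b1 : b <= 1 by rewrite /b ler_pdivrMr // mul1r ler_nat.
have ab : a < b by rewrite -subr_gt0 ba invr_gt0.
have a01 : a \in `[0, 1] by rewrite in_itv /= a0 /=; apply: le_trans (ltW ab) b1.
apply: n1_le_const => i.
have [c c01 E] := mvt_step a b i a0 ab b1.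
have c01' : c \in `[0, 1].
  move: c01; rewrite !in_itv /= => /andP [c1 c2]; apply/andP; split.
    by apply: le_trans a0 (ltW c1).
  by apply: le_trans (ltW c2) b1.
have -> : (H b - H a - n%:R^-1 *: F a) i 0 = H b i 0 - H a i 0 - n%:R^-1 * F a i 0.
  by rewrite !mxE.
rewrite E ba.
have -> : F c i 0 * n%:R^-1 - n%:R^-1 * F a i 0 = n%:R^-1 * (F c i 0 - F a i 0) by ring.
rewrite normrM ger0_norm; last by rewrite invr_ge0 ltW.
apply: ler_wpM2l; first by rewrite invr_ge0 ltW.
apply: le_trans (n1_entryB (F c) (F a) i) _.
apply: hom => //.
move: c01; rewrite in_itv /= => /andP [c1 c2].
rewrite ger0_norm; last by rewrite subr_ge0 ltW.
by rewrite -ba lerD2r ltW.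
Qed.



Lemma e_step (n k : nat) (om eps eta Kh : R) :
  (0 < n)%N -> (k < n)%N -> 0 <= eps ->
  (forall a c, a \in `[0, 1] -> c \in `[0, 1] -> `|c - a| <= n%:R^-1 -> n1 (F c - F a) <= om) ->
  (forall z, `|z| <= eta -> `|s z - z| <= eps * `|z|) ->
  n1 (hstate s alpha Abar bbar x n k) <= Kh ->
  n%:R `^ (- (1 - alpha)) * (mA * Kh + mb) <= eta ->
  n1 (H (k.+1%:R / n%:R) - hstate s alpha Abar bbar x n k.+1)
   <= (1 + mA / n%:R) * n1 (H (k%:R / n%:R) - hstate s alpha Abar bbar x n k)
      + n%:R^-1 * (d%:R * om + eps * (mA * Kh + mb)).
Proof.
move=> n0 kn e0 hom hs hKh heta.
have N0 : 0 < n%:R :> R by rewrite ltr0n.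
have t01 : (k%:R / n%:R : R) \in `[0, 1].
  rewrite in_itv /=; apply/andP; split; first by rewrite divr_ge0 // ltW.
  by rewrite ler_pdivrMr // mul1r ler_nat ltnW.
have hr := r_bound n k om n0 kn hom.
rewrite h_step.
move: (hstate s alpha Abar bbar x n k) hKh => hk hKh.
move: (k%:R / n%:R) t01 hr => t t01 hr.
move: (H (k.+1%:R / n%:R)) hr => Hk1 hr.
rewrite (@e_id (H t) Hk1 hk _ (bbar t) (Abar t) _ (n%:R `^ (- (1 - alpha))) _ (powR_split (n%:R) N0)).
set ca := n%:R `^ (- alpha).
set cb := n%:R `^ (- (1 - alpha)).
set y := cb *: (Abar t *m hk + bbar t).
set B := mA * Kh + mb.
have ca0 : 0 <= ca by apply: powR_ge0.
have cb0 : 0 <= cb by apply: powR_ge0.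
have hB : n1 (Abar t *m hk + bbar t) <= B.
  apply: le_trans (n1D _ _) _; apply: lerD; last exact: hmb.
  apply: le_trans (n1_mul _ _) _; apply: ler_pM; [exact: m1_ge0|exact: n1_ge0|exact: hmA|exact: hKh].
have hy : n1 y <= cb * B by rewrite /y n1Z ger0_norm //; apply: ler_wpM2l.
have hyeta : n1 y <= eta by apply: le_trans hy heta.
have hd := sig_bound y eps eta e0 hs hyeta.
have hW : n1 (ca *: (sigmad s y - y)) <= n%:R^-1 * (eps * B).
  rewrite n1Z ger0_norm // -(powR_split (n%:R) N0) -/ca -/cb.
  have -> : ca * cb * (eps * B) = ca * (eps * (cb * B)) by ring.
  apply: ler_wpM2l => //; apply: le_trans hd _; by apply: ler_wpM2l.
have hZ : n1 (n%:R^-1 *: (Abar t *m (H t - hk))) <= n%:R^-1 * (mA * n1 (H t - hk)).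
  rewrite n1Z ger0_norm; last by rewrite invr_ge0 ltW.
  apply: ler_wpM2l; first by rewrite invr_ge0 ltW.
  apply: le_trans (n1_mul _ _) _; apply: ler_wpM2r; [exact: n1_ge0| exact: hmA].
have hX := n1_ge0 (H t - hk).
apply: le_trans (n1D _ _) _; rewrite n1N.
apply: le_trans (lerD (n1D _ _) (lexx _)) _.
apply: le_trans (lerD (lerD (n1D _ _) (lexx _)) (lexx _)) _.
apply: le_trans (lerD (lerD (lerD (lexx _) hr) hZ) hW) _.
rewrite le_eqVlt; apply/orP; left; apply/eqP; rewrite /F; ring.
Qed.


Hypothesis H0 : H 0 = x.

Lemma n1_0 : n1 (0 : 'cV[R]_d) = 0.
Proof. by rewrite /n1 big1 // => i _; rewrite mxE normr0. Qed.

Lemma disc_bound (n : nat) (om eps eta Kh : R) :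
  (0 < n)%N -> 0 <= eps -> 0 <= om -> 0 <= Kh ->
  (forall a c, a \in `[0, 1] -> c \in `[0, 1] -> `|c - a| <= n%:R^-1 -> n1 (F c - F a) <= om) ->
  (forall z, `|z| <= eta -> `|s z - z| <= eps * `|z|) ->
  (forall k, (k <= n)%N -> n1 (hstate s alpha Abar bbar x n k) <= Kh) ->
  n%:R `^ (- (1 - alpha)) * (mA * Kh + mb) <= eta ->
  forall k, (k <= n)%N ->
  n1 (H (k%:R / n%:R) - hstate s alpha Abar bbar x n k)
   <= expR mA * (d%:R * om + eps * (mA * Kh + mb)).
Proof.
move=> n0 e0 om0 Kh0 hom hs hKh heta k kn.
have N0 : 0 < n%:R :> R by rewrite ltr0n.
have q1 : 1 <= 1 + mA / n%:R by rewrite lerDl divr_ge0 // ltW.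
have rho0 : 0 <= n%:R^-1 * (d%:R * om + eps * (mA * Kh + mb)).
  apply: mulr_ge0; first by rewrite invr_ge0 ltW.
  apply: addr_ge0; apply: mulr_ge0 => //; apply: addr_ge0 => //; exact: mulr_ge0.
have G := @gronwall R (1 + mA / n%:R) _
  (fun k => n1 (H (k%:R / n%:R) - hstate s alpha Abar bbar x n k)) n q1 rho0.
have E0 : n1 (H (0%:R / n%:R) - hstate s alpha Abar bbar x n 0) <= 0.
  by rewrite /= mul0r H0 subrr n1_0.
have Es : forall j, (j < n)%N -> n1 (H (j.+1%:R / n%:R) - hstate s alpha Abar bbar x n j.+1) <=
   (1 + mA / n%:R) * n1 (H (j%:R / n%:R) - hstate s alpha Abar bbar x n j) +
   n%:R^-1 * (d%:R * om + eps * (mA * Kh + mb)).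
  move=> j jn; apply: (@e_step n j om eps eta Kh n0 jn e0 hom hs _ heta).
  exact: hKh (ltnW jn).
have Hk := G E0 Es k kn.
  apply: le_trans Hk _.
  have qk := expbound mA0 n0 kn.
  have kN : k%:R <= n%:R :> R by rewrite ler_nat.
  have -> : expR mA * (d%:R * om + eps * (mA * Kh + mb)) =
     expR mA * n%:R * (n%:R^-1 * (d%:R * om + eps * (mA * Kh + mb))).
    by rewrite -[expR mA * n%:R * _]mulrA [n%:R * _]mulrA mulfV ?gt_eqF // mul1r.
  apply: ler_wpM2r => //; apply: ler_pM => //; first exact: exprn_ge0 (le_trans ler01 q1).
Qed.


Lemma t_bound (n : nat) (om eps eta Kh : R) :
  (0 < n)%N -> 0 <= eps -> 0 <= om -> 0 <= Kh ->
  (forall a c, a \in `[0, 1] -> c \in `[0, 1] -> `|c - a| <= n%:R^-1 -> n1 (F c - F a) <= om) ->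
  (forall z, `|z| <= eta -> `|s z - z| <= eps * `|z|) ->
  (forall k, (k <= n)%N -> n1 (hstate s alpha Abar bbar x n k) <= Kh) ->
  n%:R `^ (- (1 - alpha)) * (mA * Kh + mb) <= eta ->
  forall t, t \in `[0, 1] ->
  vnorm (H t - hstate s alpha Abar bbar x n (Num.truncn (t * n%:R)))
   <= d%:R * KF * n%:R^-1 + expR mA * (d%:R * om + eps * (mA * Kh + mb)).
Proof.
move=> n0 e0 om0 Kh0 hom hs hKh heta t t01.
have N0 : 0 < n%:R :> R by rewrite ltr0n.
move: (t01); rewrite in_itv /= => /andP [t0 t1].
have tN0 : 0 <= t * n%:R by rewrite mulr_ge0 // ltW.
have /andP [k1 k2] := truncn_itv tN0.
set k := Num.truncn (t * n%:R) in k1 k2 *.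
have kn : (k <= n)%N.
  rewrite /k truncn_le_nat; apply: le_lt_trans (_ : n%:R < _); last by rewrite ltr_nat.
  by rewrite -[X in _ <= X]mul1r ler_wpM2r // ltW.
have tk : `|t - k%:R / n%:R| <= n%:R^-1.
  have -> : t - k%:R / n%:R = (t * n%:R - k%:R) / n%:R.
    by rewrite mulrBl mulfK // gt_eqF.
  rewrite ger0_norm; last by rewrite divr_ge0 ?subr_ge0 // ltW.
  rewrite ler_pdivrMr // mulVf ?gt_eqF //.
  move: k2; rewrite -natr1 => k2; lra.
have k01 : (k%:R / n%:R : R) \in `[0, 1].
  rewrite in_itv /=; apply/andP; split; first by rewrite divr_ge0 // ltW.
  by rewrite ler_pdivrMr // mul1r ler_nat.
apply: le_trans (vnorm_le_n1 _) _.
have -> : H t - hstate s alpha Abar bbar x n k =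
  (H t - H (k%:R / n%:R)) + (H (k%:R / n%:R) - hstate s alpha Abar bbar x n k).
  by rewrite addrA subrK.
apply: le_trans (n1D _ _) _; apply: lerD; last exact: (@disc_bound n om eps eta Kh n0 e0 om0 Kh0 hom hs hKh heta k kn).
apply: le_trans (H_lip _ _ k01 t01) _.
apply: ler_wpM2l => //; apply: mulr_ge0 => //; rewrite /KF.
by apply: addr_ge0 => //; apply: mulr_ge0.
Qed.

End Main.



Lemma inv_small (R : realType) (r : R) : 0 < r -> \forall n \near \oo, n%:R^-1 <= r.
Proof.
move=> r0; near=> n.
have h : r^-1 <= n%:R by near: n; exact: nbhs_infty_ger.
have n0 : 0 < n%:R :> R by apply: lt_le_trans h; rewrite invr_gt0.
by rewrite -[X in _ <= X]invrK lef_pV2 ?posrE ?invr_gt0.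
Unshelve. all: by end_near.
Qed.

Theorem theorem1 (R : realType) (d : nat) (alpha : R) (s : R -> R)
  (Abar : R -> 'M[R]_d) (bbar : R -> 'cV[R]_d) (x : 'cV[R]_d)
  (M kappa p1 C0 : R) (H : R -> 'cV[R]_d) :
  (0 < d)%N ->
  0 < alpha < 1 ->
  activation_assumption s ->
  0 < M -> 0 < kappa ->
  (forall s0 t : R, s0 \in `[0, 1] -> t \in `[0, 1] ->
     fnorm (Abar t - Abar s0) ^+ 2 + vnorm (bbar t - bbar s0) ^+ 2
       <= M * `|t - s0| `^ kappa) ->
  4 < p1 -> 0 < C0 ->
  (forall L k : nat, (k <= L)%N ->
     vnorm (hstate s alpha Abar bbar x L k) `^ p1 <= C0) ->
  H 0 = x ->
  {within `[0, 1], continuous H} ->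
  (forall t : R, t \in `]0, 1[ ->
     is_derive t 1 H (Abar t *m H t + bbar t)) ->
  (fun L : nat =>
     sup [set vnorm (H t - hstate s alpha Abar bbar x L (Num.truncn (t * L%:R)))
         | t in `[0, 1]]) @ \oo --> (0 : R).
Proof.
move=> d0 /andP [a0 a1] act M0 k0 Hold p14 C00 hb H0 Hc Hd.
case: act => ds [_ [_ [_ [s0 [d1 _]]]]].
have [mA mA0 [mb mb0 hAB]] := @AB_bound R d Abar bbar M kappa M0 k0 Hold.
have hmA t : t \in `[0, 1] -> m1 (Abar t) <= mA by move=> /hAB [].
have hmb t : t \in `[0, 1] -> n1 (bbar t) <= mb by move=> /hAB [].
have [KH KH0 hKH] := @H_bound R d H Hc.
have dR : 0 <= d%:R :> R by exact: ler0n.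
have d1R : 1 <= d%:R :> R by rewrite ler1n.
set KF := mA * KH + mb.
have KF0 : 0 <= KF by rewrite /KF addr_ge0 // mulr_ge0.
set Kh := d%:R * (1 + C0).
have Kh0 : 0 <= Kh by rewrite /Kh mulr_ge0 //; lra.
have hKh : forall n k, (k <= n)%N -> n1 (hstate s alpha Abar bbar x n k) <= Kh.
  move=> n k kn; apply: le_trans (n1_le_vnorm _) _; apply: ler_wpM2l => //.
  have := hb n k kn.
  move: (vnorm _) => v hv.
  case: (leP v 1) => v1; first by lra.
  have : v <= v `^ p1 by apply: le1r_powR; [exact: ltW | lra].
  lra.
set B := mA * Kh + mb.
have B0 : 0 <= B by rewrite /B addr_ge0 // mulr_ge0.
set Cst0 := d%:R * KF + expR mA * (d%:R * (mA * (d%:R * KF) + (d * d)%:R * KH + (d * d)%:R) + B).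
have Cst00 : 0 <= Cst0.
  apply: addr_ge0; first exact: mulr_ge0.
  apply: mulr_ge0; first exact: expR_ge0.
  apply: addr_ge0 => //; apply: mulr_ge0 => //.
  apply: addr_ge0; last exact: ler0n.
  apply: addr_ge0; apply: mulr_ge0 => //; try exact: ler0n.
  exact: mulr_ge0.
apply/cvgrPdist_le => e e0.
set eps := e / (Cst0 + 1).
have eps0 : 0 < eps by rewrite /eps divr_gt0 //; lra.
have [ets ets0 hs] := sigma_lin (ds 0) d1 s0 eps0.
have [del del0 hdel] := @holder_uc R
  (fun s0 t => fnorm (Abar t - Abar s0) ^+ 2 + vnorm (bbar t - bbar s0) ^+ 2)
  M kappa M0 k0 Hold (eps ^+ 2) (exprn_gt0 2 eps0).
set eta := (d * d)%:R * eps.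
have hAb : forall a c, a \in `[0, 1] -> c \in `[0, 1] -> `|c - a| <= del ->
    m1 (Abar c - Abar a) <= eta /\ n1 (bbar c - bbar a) <= eta.
  move=> a c a01 c01 ca.
  have := hdel a c a01 c01 ca => /= hg.
  have [hA hbb] := sqr_le (sqrtr_ge0 _) (sqrtr_ge0 _) (ltW eps0) hg.
  split.
    apply: le_trans (m1_le_fnorm _) _; apply: ler_wpM2l => //; exact: ler0n.
  apply: le_trans (n1_le_vnorm _) _; rewrite /eta.
  apply: le_trans (_ : d%:R * eps <= _).
    exact: ler_wpM2l.
  apply: ler_wpM2r; first exact: ltW.
  by rewrite ler_nat leq_pmulr.
near=> n.
have n0 : (0 < n)%N by near: n; exact: nbhs_infty_gt.
have nd : n%:R^-1 <= del by near: n; exact: inv_small.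
have ne : n%:R^-1 <= eps by near: n; exact: inv_small.
have np : n%:R `^ (- (1 - alpha)) <= ets / (B + 1).
  near: n; apply: pow_decay; [lra| rewrite divr_gt0 //; lra].
have heta : n%:R `^ (- (1 - alpha)) * B <= ets.
  apply: le_trans (ler_wpM2r B0 np) _.
  rewrite mulrAC ler_pdivrMr; last by lra.
  by apply: ler_wpM2l; [exact: ltW| lra].
have eta0 : 0 <= eta by rewrite /eta mulr_ge0 // ?ler0n // ltW.
set om := mA * (d%:R * KF * eps) + eta * KH + eta.
have om0 : 0 <= om.
  rewrite /om; apply: addr_ge0 => //; apply: addr_ge0; last exact: mulr_ge0.
  apply: mulr_ge0 => //; apply: mulr_ge0; [exact: mulr_ge0| exact: ltW].
have hom : forall a c, a \in `[0, 1] -> c \in `[0, 1] -> `|c - a| <= n%:R^-1 ->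
    n1 (F _ _ Abar bbar H c - F _ _ Abar bbar H a) <= om.
  move=> a c a01 c01 ca.
  have [hA hbb] := hAb a c a01 c01 (le_trans ca nd).
  apply: le_trans (@F_mod R d Abar bbar H Hc Hd mA mb KH hmA hmb hKH a c eta a01 c01 hA hbb) _.
  rewrite /om lerD2r lerD2r; apply: ler_wpM2l => //.
  apply: ler_wpM2l; first exact: mulr_ge0.
  exact: le_trans ca ne.
have T := @t_bound R d alpha s Abar bbar x H Hc Hd mA mb KH mA0 mb0 KH0 hmA hmb hKH
  H0 n om eps ets Kh n0 (ltW eps0) om0 Kh0 hom hs (hKh n) heta.
have Tb : forall t, t \in `[0, 1] ->
    vnorm (H t - hstate s alpha Abar bbar x n (Num.truncn (t * n%:R))) <= eps * Cst0.
  move=> t t01; apply: le_trans (T t t01) _.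
  apply: le_trans (_ : d%:R * KF * eps + expR mA * (d%:R * om + eps * (mA * Kh + mb)) <= _).
    by rewrite lerD2r; apply: ler_wpM2l => //; exact: mulr_ge0.
  by rewrite le_eqVlt; apply/orP; left; apply/eqP; rewrite /om /eta /Cst0 /B; ring.
rewrite sub0r normrN.
match goal with |- context [sup ?X] => set S := X end.
have ub : ubound S (eps * Cst0).
  by move=> y [t t01 <-]; apply: Tb.
have z01 : (0 : R) \in `[0, 1] by rewrite in_itv /= lexx ler01.
have Sne : S !=set0.
  by exists (vnorm (H 0 - hstate s alpha Abar bbar x n (Num.truncn ((0 : R) * n%:R)))); exists 0.
have supl := ge_sup Sne ub.
have supg : 0 <= sup S.
  apply: le_trans (_ : vnorm (H 0 - hstate s alpha Abar bbar x n (Num.truncn ((0 : R) * n%:R))) <= _).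
    exact: sqrtr_ge0.
  apply: ub_le_sup; first by exists (eps * Cst0).
  by exists 0.
rewrite ger0_norm //; apply: le_trans supl _.
rewrite /eps mulrAC ler_pdivrMr; last by lra.
by apply: ler_wpM2l; [exact: ltW| lra].
Unshelve. all: by end_near.
Qed.
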